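(* Let $n,k$ be integers with $1<k<n-1$ and let $\mathcal{P}_{k,n}=\{x\in[0,1]^n:\sum_{i=1}^n x_i=k\}$ with vertex set $V$. There is no family of Bernstein polynomials $\{P_v\}_{v\in V}$ such that the Bernoulli race over $\{P_v\}_{v\in V}$ is a strong Bernoulli factory for $\mathcal{P}_{k,n}$.
   Context: A Bernstein monomial is $\prod_{i=1}^n x_i^{a_i}(1-x_i)^{b_i}$ with nonnegative integers $a_i,b_i$; a Bernstein polynomial is a finite combination $\sum_j c_jM_j(x)$ of Bernstein monomials with positive coefficients $c_j$. A Bernoulli factory with output set $V$ (for inputs $x\in[0,1]^n$) is a (possibly infinite) rooted binary tree whose internal nodes are labeled by an index $i\in[n]$ or a known constant $c\in(0,1)$ and whose leaves are labeled by elements of $V$; on input $x$ one walks from the root, at a node labeled $i$ flipping a fresh independent coin that is $1$ with probability $x_i$ (an $x_i$-coin), at a node labeled $c$ a fresh coin of bias $c$, following the edge labeled by the outcome, and outputs the label of the leaf reached. A strong Bernoulli factory for a polytope $\mathcal{P}$ with vertex set $V$ is such a factory with output set $V$ that terminates almost surely and satisfies $\mathbb{E}[\mathcal{F}(x)]=x$ for all $x\in\mathcal{P}$. The Bernoulli race over Bernstein polynomials $\{P_v\}_{v\in V}$ is the following factory: fix a constant $C\ge1$ at least the sum of the coefficients of every $P_v$. In each round, pick $v\in V$ uniformly at random; writing $P_v=\sum_j c_jM_j$, select monomial $M_j$ with probability $c_j/C$ (with the remaining probability select none, which counts as failure); if $M_j=\prod_i x_i^{a_i}(1-x_i)^{b_i}$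 is selected, flip the $x_i$-coin $a_i+b_i$ times for each $i$, and declare success iff for every $i$ the first $a_i$ flips are $1$ and the next $b_i$ flips are $0$. On success output $v$; otherwise start a new round. *)

(* Defs.v *)
From HB Require Import structures.
From mathcomp Require Import all_boot all_order all_algebra.
From mathcomp Require Import all_classical all_reals all_analysis.
Set Implicit Arguments. Unset Strict Implicit. Unset Printing Implicit Defensive.
Import Order.TTheory GRing.Theory Num.Theory.
Local Open Scope ring_scope.

Section BernoulliRace.
Variables (R : realType) (n : nat).

Definition bmono := (('I_n -> nat) * ('I_n -> nat))%type.

Definition bmono_eval (m : bmono) (x : 'I_n -> R) : R :=
  \prod_(i < n) (x i ^+ m.1 i * (1 - x i) ^+ m.2 i).

Definition bpoly := seq (R * bmono).

Definition is_bernstein (p : bpoly) : Prop := forall t, t \in p -> 0 < t.1.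

Definition coef_sum (p : bpoly) : R := \sum_(t <- p) t.1.

Definition in_Pkn (k : nat) (x : 'I_n -> R) : Prop :=
  (forall i, 0 <= x i <= 1) /\ \sum_(i < n) x i = k%:R.

(* Vertex set of P_{k,n} (1 < k < n-1): the 0/1-vectors with exactly k ones,
   encoded by their supports S ⊆ [n] with |S| = k. *)
Definition vertices (k : nat) : {set {set 'I_n}} := [set S : {set 'I_n} | #|S| == k].
Definition vertex_vec (S : {set 'I_n}) : 'I_n -> R := fun i => (i \in S)%:R.

(* One round of the Bernoulli race over {P_v}_{v in V} with constant C, on
   input x: v is picked uniformly (prob 1/|V|), monomial M_j of P_v is picked
   with probability c_j/C, and the independent coin flips all come out as
   required with probability M_j(x).  race_round_succ returns the probability
   that a single round succeeds *and* outputs v. *)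
Definition race_round_succ (V : {set {set 'I_n}}) (P : {set 'I_n} -> bpoly)
  (C : R) (x : 'I_n -> R) (v : {set 'I_n}) : R :=
  (#|V|%:R)^-1 * \sum_(t <- P v) (t.1 / C * bmono_eval t.2 x).

Definition race_round_fail (V : {set {set 'I_n}}) (P : {set 'I_n} -> bpoly) (C : R) (x : 'I_n -> R) : R :=
  1 - \sum_(w in V) race_round_succ V P C x w.

(* Probability that the race outputs v: it does so at round r+1 iff the
   first r rounds fail and round r+1 succeeds with output v (rounds are
   independent). *)
Definition race_output_prob (V : {set {set 'I_n}}) (P : {set 'I_n} -> bpoly) (C : R) (x : 'I_n -> R) (v : {set 'I_n}) : \bar R :=
  (\sum_(0 <= r <oo) ((race_round_fail V P C x ^+ r
                        * race_round_succ V P C x v)%:E))%E.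

(* The race is a strong Bernoulli factory for P_{k,n}: for every x in the
   polytope it terminates almost surely (output probabilities sum to 1) and
   the expected output vertex equals x. *)
Definition race_strong_factory (k : nat) (P : {set 'I_n} -> bpoly) (C : R)
  : Prop :=
  forall x, in_Pkn k x ->
    (\sum_(v in vertices k) race_output_prob (vertices k) P C x v = 1)%E /\
    (forall i : 'I_n,
       (\sum_(v in vertices k)
          race_output_prob (vertices k) P C x v * (vertex_vec v i)%:E
        = (x i)%:E)%E).

Definition valid_race (k : nat) (P : {set 'I_n} -> bpoly) (C : R) : Prop :=
  (forall v, v \in vertices k -> is_bernstein (P v)) /\ 1 <= C /\
  (forall v, v \in vertices k -> coef_sum (P v) <= C).

End BernoulliRace.

(* Main.v *)
Require Import Defs.
From HB Require Import structures.
From mathcomp Require Import all_boot all_order all_algebra.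
From mathcomp Require Import all_classical all_reals all_analysis.
Import Order.TTheory GRing.Theory Num.Theory.
Local Open Scope ring_scope.
Set Implicit Arguments. Unset Strict Implicit.

Lemma geomE (R : realType) (f a : R) : 0 <= f -> f < 1 ->
  (\sum_(0 <= r <oo) ((f ^+ r * a)%:E))%E = (a / (1 - f))%:E.
Proof.
move=> f0 f1.
have -> : (fun m => \sum_(0 <= r < m) ((f ^+ r * a)%:E))%E = EFin \o series (geometric a f).
  apply/funext => m /=; rewrite sumEFin /series /=; congr (_%:E).
  by apply: eq_bigr => r _; rewrite mulrC.
rewrite EFin_lim; last by apply: is_cvg_geometric_series; rewrite ger0_norm.
congr (_%:E).
have h : `|f| < 1 by rewrite ger0_norm.
have H := @cvg_geometric_series _ a _ h.
exact: (@cvg_lim R^o _ _ _ _ _ _ H).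
Qed.

Lemma zero_series (R : realType) (g : nat -> R) :
  (\sum_(0 <= r <oo) ((g r * 0)%:E))%E = 0%E.
Proof.
have -> : (fun m => \sum_(0 <= r < m) ((g r * 0)%:E))%E = fun _ => 0%E.
  by apply/funext => m; rewrite big1 // => r _; rewrite mulr0.
exact: lim_cst.
Qed.

Lemma prod_le1 (R : realType) n (F : 'I_n -> R) l :
  (forall m, 0 <= F m <= 1) -> \prod_m F m <= F l.
Proof.
move=> h; rewrite (bigD1 l) //= -[leRHS]mulr1.
have /andP[h0 _] := h l.
apply: ler_wpM2l => //; exact: prodr_ile1.
Qed.

Lemma prod_le2 (R : realType) n (F : 'I_n -> R) l l' : l != l' ->
  (forall m, 0 <= F m <= 1) -> \prod_m F m <= F l * F l'.
Proof.
move=> ll h; rewrite (bigD1 l) //= (bigD1 l') //=; last by rewrite eq_sym.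
rewrite mulrA -[leRHS]mulr1.
have /andP[h0 _] := h l; have /andP[h0' _] := h l'.
apply: ler_wpM2l; first exact: mulr_ge0.
by apply: prodr_ile1 => m _; exact: h.
Qed.

Lemma sum_ge_term (R : realType) (T : eqType) (r : seq T) (F : T -> R) x :
  x \in r -> (forall y, y \in r -> 0 <= F y) -> F x <= \sum_(y <- r) F y.
Proof.
elim: r => [|y r IH]; first by rewrite in_nil.
rewrite inE big_cons => /orP[/eqP->|xr] h.
  rewrite lerDl big_seq; apply: sumr_ge0 => z zr; apply: h.
  by rewrite inE zr orbT.
rewrite -[leLHS]add0r; apply: lerD; first by apply: h; rewrite inE eqxx.
by apply: IH => // z zr; apply: h; rewrite inE zr orbT.
Qed.

Definition fac (R : realType) n (m : bmono n) (x : 'I_n -> R) l :=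
  x l ^+ m.1 l * (1 - x l) ^+ m.2 l.
Arguments fac {R n}.

Lemma fac01 (R : realType) n (m : bmono n) (x : 'I_n -> R) l :
  0 <= x l <= 1 -> 0 <= fac m x l <= 1.
Proof.
move=> /andP[h0 h1]; rewrite /fac; have h2 : 0 <= 1 - x l by rewrite subr_ge0.
have h3 : 1 - x l <= 1 by rewrite lerBlDr lerDl.
apply/andP; split; first by rewrite mulr_ge0 // exprn_ge0.
by rewrite mulr_ile1 ?exprn_ge0 ?exprn_ile1.
Qed.

Lemma eval_fac (R : realType) n (m : bmono n) (x : 'I_n -> R) :
  bmono_eval m x = \prod_l fac m x l.
Proof. by []. Qed.

From mathcomp Require Import ring lra.

Definition cube (R : realType) n (x : 'I_n -> R) := forall i, 0 <= x i <= 1.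
Arguments cube {R n}.

Lemma eval01 (R : realType) n (m : bmono n) (x : 'I_n -> R) :
  cube x -> 0 <= bmono_eval m x <= 1.
Proof.
move=> hx; rewrite eval_fac; apply/andP; split.
  by apply: prodr_ge0 => l _; have /andP[] := fac01 m (hx l).
by apply: prodr_ile1 => l _; exact: fac01.
Qed.

Lemma C_pos (R : realType) n k (P : {set 'I_n} -> bpoly R n) C :
  valid_race k P C -> 0 < C.
Proof. by case=> _ [hC _]; apply: lt_le_trans hC. Qed.

Lemma s_ge0 (R : realType) n k (P : {set 'I_n} -> bpoly R n) C x v :
  valid_race k P C -> cube x -> v \in vertices n k ->
  0 <= race_round_succ (vertices n k) P C x v.
Proof.
move=> hv hx vV; have C0 := C_pos hv; case: hv => hb _.
rewrite /race_round_succ; apply: mulr_ge0; first by rewrite invr_ge0.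
rewrite big_seq; apply: sumr_ge0 => t tin; apply: mulr_ge0.
  by apply: divr_ge0; [exact: ltW (hb v vV t tin)| exact: ltW].
by have /andP[] := eval01 t.2 hx.
Qed.

Lemma s_le (R : realType) n k (P : {set 'I_n} -> bpoly R n) C x v B :
  valid_race k P C -> cube x -> v \in vertices n k -> 0 <= B ->
  (forall t, t \in P v -> bmono_eval t.2 x <= B) ->
  race_round_succ (vertices n k) P C x v <= (#|vertices n k|%:R)^-1 * B.
Proof.
move=> hv hx vV B0 hB; have C0 := C_pos hv; case: hv => hb [_ hc].
rewrite /race_round_succ; apply: ler_wpM2l; first by rewrite invr_ge0.
apply: (@le_trans _ _ (\sum_(t <- P v) (t.1 / C * B))).
  rewrite big_seq [leRHS]big_seq; apply: ler_sum => t tin.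
  apply: ler_wpM2l; last exact: hB.
  by apply: divr_ge0; [exact: ltW (hb v vV t tin)| exact: ltW].
rewrite -mulr_suml -mulr_suml -[leRHS]mul1r; apply: ler_wpM2r => //.
by rewrite ler_pdivrMr // mul1r; exact: hc.
Qed.

Lemma s_lb (R : realType) n k (P : {set 'I_n} -> bpoly R n) C x v t :
  valid_race k P C -> cube x -> v \in vertices n k -> t \in P v ->
  (#|vertices n k|%:R)^-1 * (t.1 / C * bmono_eval t.2 x)
    <= race_round_succ (vertices n k) P C x v.
Proof.
move=> hv hx vV tin; have C0 := C_pos hv; case: hv => hb _.
rewrite /race_round_succ; apply: ler_wpM2l; first by rewrite invr_ge0.
apply: (sum_ge_term (F := fun t : R * bmono n => t.1 / C * bmono_eval t.2 x)) => // y yin.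
apply: mulr_ge0.
  by apply: divr_ge0; [exact: ltW (hb v vV y yin)| exact: ltW].
by have /andP[] := eval01 y.2 hx.
Qed.

Lemma S_le1 (R : realType) n k (P : {set 'I_n} -> bpoly R n) C x :
  valid_race k P C -> cube x ->
  \sum_(w in vertices n k) race_round_succ (vertices n k) P C x w <= 1.
Proof.
move=> hv hx.
apply: (@le_trans _ _ (\sum_(w in vertices n k) (#|vertices n k|%:R)^-1 * (1 : R))).
  apply: ler_sum => w wV; apply: s_le => // t _; by have /andP[] := eval01 t.2 hx.
rewrite sumr_const mulr1 -(mulr_natr ((#|vertices n k|%:R : R)^-1)).
have [->|h0] := eqVneq #|vertices n k| 0%N; first by rewrite /= mulr0n.
by rewrite mulVf // pnatr_eq0.
Qed.

Lemma key (R : realType) n k (P : {set 'I_n} -> bpoly R n) C x :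
  valid_race k P C -> race_strong_factory k P C -> in_Pkn k x ->
  0 < \sum_(w in vertices n k) race_round_succ (vertices n k) P C x w /\
  forall i, \sum_(v in vertices n k) race_round_succ (vertices n k) P C x v * vertex_vec R v i
     = x i * \sum_(w in vertices n k) race_round_succ (vertices n k) P C x w.
Proof.
move=> hv hf hx; have [h1 h2] := hf x hx; have cx : cube x := hx.1.
have S1 := S_le1 hv cx.
rewrite /race_output_prob /race_round_fail in h1 h2.
set S := \sum_(w in vertices n k) _ in S1 h1 h2 *.
have sge := fun v vV => s_ge0 (x := x) (v := v) hv cx vV.
have S0 : 0 <= S by apply: sumr_ge0.
have sle : forall v, v \in vertices n k -> race_round_succ (vertices n k) P C x v <= S.
  move=> v vV; rewrite /S (bigD1 v) //= lerDl; apply: sumr_ge0 => w /andP[wV _].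
  exact: sge.
have Spos : 0 < S.
  rewrite lt_neqAle S0 andbT; apply/negP => /eqP S0'.
  move: h1; rewrite big1; first by move/eqP; rewrite eq_sym onee_eq0.
  move=> v vV.
  have -> : race_round_succ (vertices n k) P C x v = 0.
    by apply/le_anti; rewrite sge // andbT S0' sle.
  exact: zero_series.
have rop : forall v, v \in vertices n k ->
    (\sum_(0 <= r <oo) ((1 - S) ^+ r * race_round_succ (vertices n k) P C x v)%:E)%E
    = (race_round_succ (vertices n k) P C x v / S)%:E.
  move=> v vV; rewrite geomE; last by lra.
    by congr (_ / _)%:E; ring.
  by lra.
split => // i; have := h2 i.
have E : forall v, v \in vertices n k ->
   ((\sum_(0 <= r <oo) ((1 - S) ^+ r * race_round_succ (vertices n k) P C x v)%:E)
    * (vertex_vec R v i)%:E)%E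
    = (race_round_succ (vertices n k) P C x v / S * vertex_vec R v i)%:E.
  by move=> v vV; rewrite rop.
rewrite (eq_bigr _ E).
rewrite sumEFin => hh; have {hh} <- := EFin_inj hh. rewrite mulr_suml; apply: eq_bigr => v _.
by field; rewrite gt_eqF.
Qed.

Lemma s_pos (R : realType) n k (P : {set 'I_n} -> bpoly R n) C x v t :
  valid_race k P C -> cube x -> v \in vertices n k -> t \in P v ->
  0 < bmono_eval t.2 x -> 0 < race_round_succ (vertices n k) P C x v.
Proof.
move=> hv cx vV tin Mpos; apply: lt_le_trans (s_lb hv cx vV tin).
have C0 := C_pos hv; have [hb _] := hv.
have V0 : (0 < #|vertices n k|)%N by apply/card_gt0P; exists v.
apply: mulr_gt0; first by rewrite invr_gt0 ltr0n.
by apply: mulr_gt0 => //; apply: divr_gt0 => //; exact: hb v vV t tin.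
Qed.

Lemma test_sum (R : realType) n (l : 'I_n) (a c : R) :
  \sum_(m < n) (if m == l then a else c) = a + c *+ n.-1.
Proof.
rewrite (bigD1 l) //= eqxx (eq_bigr (fun _ => c)); last by move=> m /negbTE ->.
by rewrite sumr_const cardC1 card_ord.

Qed.
Lemma facet_a (R : realType) n k (P : {set 'I_n} -> bpoly R n) C v t l :
  valid_race k P C -> race_strong_factory k P C -> (0 < k)%N -> (k < n.-1)%N ->
  v \in vertices n k -> t \in P v -> l \in v -> (0 < t.2.1 l)%N.
Proof.
move=> hv hf k0 kn vV tin lv.
pose c : R := k%:R / n.-1%:R.
have n0 : (0 < n.-1)%N by apply: leq_ltn_trans kn.
have n0' : 0 < (n.-1)%:R :> R by rewrite ltr0n.
have c0 : 0 < c by apply: divr_gt0; rewrite ?ltr0n.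
have c1 : c < 1 by rewrite ltr_pdivrMr // mul1r ltr_nat.
pose y : 'I_n -> R := fun m => if m == l then 0 else c.
have cy : cube y by move=> m; rewrite /y; case: (m == l); apply/andP; split => //; apply: ltW.
have hy : in_Pkn k y.
  split => //; rewrite test_sum add0r -(mulr_natr c) /c divfK //; exact: lt0r_neq0.
have [_ /(_ l)] := key hv hf hy.
rewrite {2}/y eqxx mul0r => hs.
have hge : forall w, w \in vertices n k ->
    0 <= race_round_succ (vertices n k) P C y w * vertex_vec R w l.
  by move=> w wV; apply: mulr_ge0; [exact: s_ge0 | rewrite /vertex_vec ler0n].
have := psumr_eq0P hge hs vV.
rewrite /vertex_vec lv mulr1 => s0.
rewrite lt0n; apply/negP => /eqP a0.
have : 0 < race_round_succ (vertices n k) P C y v.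
  apply: (s_pos hv cy vV tin); rewrite eval_fac; apply: prodr_gt0 => m _.
  rewrite /fac /y; case: eqP => [->|_]; first by rewrite a0 expr0 mul1r subr0 expr1n.
  by apply: mulr_gt0; apply: exprn_gt0; rewrite ?subr_gt0.
by rewrite s0 ltxx.
Qed.

Lemma facet_b (R : realType) n k (P : {set 'I_n} -> bpoly R n) C v t l :
  valid_race k P C -> race_strong_factory k P C -> (1 < k)%N -> (k < n.-1)%N ->
  v \in vertices n k -> t \in P v -> l \notin v -> (0 < t.2.2 l)%N.
Proof.
move=> hv hf k1 kn vV tin lv.
pose c : R := k.-1%:R / n.-1%:R.
have n0 : (0 < n.-1)%N by apply: leq_ltn_trans kn.
have n0' : 0 < (n.-1)%:R :> R by rewrite ltr0n.
have c0 : 0 < c by apply: divr_gt0; rewrite ?ltr0n // -ltnS prednK //; apply: ltnW.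
have c1 : c < 1.
  rewrite ltr_pdivrMr // mul1r ltr_nat; apply: leq_ltn_trans kn; exact: leq_pred.
pose y : 'I_n -> R := fun m => if m == l then 1 else c.
have cy : cube y.
  by move=> m; rewrite /y; case: (m == l); apply/andP; split => //; apply: ltW.
have hy : in_Pkn k y.
  split => //; rewrite test_sum -(mulr_natr c) /c divfK; last exact: lt0r_neq0.
  by rewrite addrC natr1 prednK //; apply: ltnW.
have [_ /(_ l)] := key hv hf hy.
rewrite {2}/y eqxx mul1r => hs.
have hs' : \sum_(w in vertices n k)
    race_round_succ (vertices n k) P C y w * (1 - vertex_vec R w l) = 0.
  under eq_bigr do rewrite mulrBr mulr1.
  by rewrite sumrB hs subrr.
have hge : forall w, w \in vertices n k ->
    0 <= race_round_succ (vertices n k) P C y w * (1 - vertex_vec R w l).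
  move=> w wV; apply: mulr_ge0; first exact: s_ge0.
  by rewrite /vertex_vec subr_ge0; case: (l \in w).
have := psumr_eq0P hge hs' vV.
rewrite /vertex_vec (negbTE lv) subr0 mulr1 => s0.
rewrite lt0n; apply/negP => /eqP a0.
have : 0 < race_round_succ (vertices n k) P C y v.
  apply: (s_pos hv cy vV tin); rewrite eval_fac; apply: prodr_gt0 => m _.
  rewrite /fac /y; case: eqP => [->|_]; first by rewrite a0 expr0 mulr1 expr1n.
  by apply: mulr_gt0; apply: exprn_gt0; rewrite ?subr_gt0.
by rewrite s0 ltxx.
Qed.

Lemma fac_le_x (R : realType) n (m : bmono n) (y : 'I_n -> R) l :
  0 <= y l <= 1 -> (0 < m.1 l)%N -> fac m y l <= y l.
Proof.
move=> /andP[h0 h1]; rewrite /fac; case: (m.1 l) => // a _.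
have h2 : 0 <= 1 - y l by rewrite subr_ge0.
have h3 : 1 - y l <= 1 by rewrite lerBlDr lerDl.
rewrite exprS -mulrA; apply: ler_piMr => //.
by rewrite mulr_ile1 ?exprn_ge0 ?exprn_ile1.
Qed.

Lemma fac_le_1x (R : realType) n (m : bmono n) (y : 'I_n -> R) l :
  0 <= y l <= 1 -> (0 < m.2 l)%N -> fac m y l <= 1 - y l.
Proof.
move=> /andP[h0 h1]; rewrite /fac; case: (m.2 l) => // a _.
have h2 : 0 <= 1 - y l by rewrite subr_ge0.
have h3 : 1 - y l <= 1 by rewrite lerBlDr lerDl.
rewrite exprS mulrC -mulrA; apply: ler_piMr => //.
by rewrite mulr_ile1 ?exprn_ge0 ?exprn_ile1.
Qed.

Lemma fac_lb (R : realType) n (m : bmono n) (y z : 'I_n -> R) l :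
  0 <= y l <= 1 -> (z l = 0 \/ z l = 1) -> `|y l - z l| <= 2^-1 ->
  (2^-1) ^+ (m.1 l + m.2 l) * fac m z l <= fac m y l.
Proof.
move=> /andP[h0 h1] hz; rewrite ler_distl => /andP[d1 d2].
have h2 : 0 <= 1 - y l by rewrite subr_ge0.
have hf : 0 <= fac m y l by rewrite /fac mulr_ge0 // exprn_ge0.
have i0 : (0 : R) <= 2^-1 by rewrite invr_ge0.
have hh : (2:R)^-1 + 2^-1 = 1 by rewrite [RHS](splitr 1) div1r.
rewrite /fac; case: hz => hz; rewrite hz in d1 d2 *.
  rewrite expr0n subr0 expr1n mulr1; case: eqP => [->|_]; last by rewrite mulr0.
  rewrite expr0 mul1r mulr1 add0n; apply: lerXn2r; rewrite ?nnegrE //; lra.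
rewrite subrr expr1n mul1r expr0n; case: eqP => [->|_]; last by rewrite mulr0 hf.
rewrite expr0 !mulr1 addn0; apply: lerXn2r; rewrite ?nnegrE //; lra.
Qed.

Lemma vvE (R : realType) n (v : {set 'I_n}) m :
  vertex_vec R v m = if m \in v then 1 else 0.
Proof. by rewrite /vertex_vec; case: (m \in v). Qed.

Lemma vvsum (R : realType) n (v : {set 'I_n}) :
  \sum_m vertex_vec R v m = #|v|%:R.
Proof.
under eq_bigr do rewrite vvE.
by rewrite -big_mkcond /= sumr_const.
Qed.

Unset Implicit Arguments.

Theorem corollary7p2 (R : realType) (n k : nat) (hk1 : (1 < k)%N)
    (hk2 : (k < n - 1)%N) :
  ~ exists (P : {set 'I_n} -> bpoly R n) (C : R),
      valid_race k P C /\ race_strong_factory k P C.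
Proof.
case=> P [C [hv hf]].
have kn : (k < n.-1)%N by rewrite -subn1.
have k0 : (0 < k)%N by apply: ltnW.
have hkn : (k < n)%N by apply: leq_trans kn (leq_pred n).
have hk1n : (k.-1 < n)%N by apply: leq_ltn_trans hkn; exact: leq_pred.
have lek : (k <= n)%N := ltnW hkn.
pose i0 : 'I_n := Ordinal hk1n.
pose j0 : 'I_n := Ordinal hkn.
pose u : {set 'I_n} := [set widen_ord lek m | m : 'I_k].
have winj : injective (widen_ord lek) by move=> a b /(congr1 val) /= e; apply: val_inj.
have cu : #|u| = k by rewrite card_imset // card_ord.
have uV : u \in vertices n k by rewrite inE cu.
have ul : forall l : 'I_n, (l \in u) = (l < k)%N.
  move=> l; apply/imsetP/idP => [[m _ ->]|lk]; first by rewrite /= ltn_ord.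
  by exists (Ordinal lk) => //; apply: val_inj.
have iu : i0 \in u by rewrite ul /= ltn_predL.
have ju : j0 \notin u by rewrite ul /= ltnn.
have ij : i0 != j0 by apply/eqP => e; move: iu; rewrite e (negbTE ju).
pose w := j0 |: (u :\ i0).
have wE : forall l, (l \in w) = (l == j0) || ((l != i0) && (l \in u)).
  by move=> l; rewrite in_setU1 in_setD1.
have cw : #|w| = k.
  rewrite cardsU1 in_setD1 (negbTE ju) andbF /=.
  by rewrite -cu (cardsD1 i0 u) iu.
have wV : w \in vertices n k by rewrite inE cw.
have hh : (2:R)^-1 + 2^-1 = 1 by rewrite [RHS](splitr 1) div1r.
have h20 : (0:R) < 2^-1 by rewrite invr_gt0.
pose xt (t : R) : 'I_n -> R :=
  fun m => (1 - t) * vertex_vec R u m + t * vertex_vec R w m.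
have xin : forall t, 0 <= t <= 1 -> in_Pkn k (xt t).
  move=> t /andP[t0 t1]; split.
    move=> m; rewrite /xt !vvE; case: (m \in u); case: (m \in w);
      apply/andP; split; lra.
  rewrite /xt big_split /= -!mulr_sumr !vvsum cu cw; ring.
have jw : j0 \in w by rewrite wE eqxx.
have iw : i0 \notin w by rewrite wE eqxx (negbTE ij).
have xj : forall t, xt t j0 = t.
  by move=> t; rewrite /xt !vvE (negbTE ju) jw mulr0 add0r mulr1.
have xi : forall t, xt t i0 = 1 - t.
  by move=> t; rewrite /xt !vvE iu (negbTE iw) mulr0 addr0 mulr1.
have xu : forall t m, m \in u -> m != i0 -> xt t m = 1.
  move=> t m mu mi; rewrite /xt !vvE mu.
  have -> : m \in w by rewrite wE mi mu orbT.
  by rewrite !mulr1 subrK.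
have x0 : xt 0 = vertex_vec R u.
  by apply/funext => m; rewrite /xt subr0 mul1r mul0r addr0.
have cu' : in_Pkn k (vertex_vec R u) by rewrite -x0; apply: xin; rewrite lexx ler01.
have cuc : cube (vertex_vec R u) := cu'.1.
have [tm tin Mpos] : exists2 tm, tm \in P u & 0 < bmono_eval tm.2 (vertex_vec R u).
  have [Spos _] := key hv hf cu'.
  have other : forall v, v \in vertices n k -> v != u ->
      race_round_succ (vertices n k) P C (vertex_vec R u) v = 0.
    move=> v vV vu.
    have : ~~ (v \subset u).
      apply/negP => vsu; have : v == u.
        rewrite eqEcard vsu cu /=; move: vV; rewrite /vertices inE => /eqP ->; exact: leqnn.
      by move=> e; rewrite e in vu.
    case/subsetPn => l lv lu.
    apply/le_anti; rewrite s_ge0 // andbT.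
    apply: le_trans (s_le (B := 0) hv cuc vV (lexx 0) _) _; last by rewrite mulr0.
    move=> t tinv; rewrite eval_fac.
    apply: le_trans (prod_le1 l (fun m => fac01 _ (cuc m))) _.
    apply: le_trans (fac_le_x (cuc l) (facet_a hv hf k0 kn vV tinv lv)) _.
    by rewrite vvE (negbTE lu).
  move: Spos; rewrite (bigD1 u) //= big1 ?addr0; last first.
    by move=> v /andP[vV vu]; exact: other.
  move=> su; case: (pselect (exists2 tm, tm \in P u & 0 < bmono_eval tm.2 (vertex_vec R u))) => // H.
  exfalso.
  have : race_round_succ (vertices n k) P C (vertex_vec R u) u <= 0.
    apply: le_trans (s_le (B := 0) hv cuc uV (lexx 0) _) _; last by rewrite mulr0.
    move=> t tinv; rewrite leNgt; apply/negP => Mp; apply: H; by exists t.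
  by rewrite leNgt su.
have C0 := C_pos hv.
have [hb _] := hv.
have V0 : (0 < #|vertices n k|)%N by apply/card_gt0P; exists u.
have V0' : 0 < (#|vertices n k|%:R : R) by rewrite ltr0n.
pose G := \prod_m ((2^-1) ^+ (tm.2.1 m + tm.2.2 m) * fac tm.2 (vertex_vec R u) m).
have G0 : 0 < G.
  rewrite /G big_split /= prodrXr -eval_fac.
  by apply: mulr_gt0 => //; apply: exprn_gt0.
pose d := (#|vertices n k|%:R)^-1 * (tm.1 / C * G).
have d0 : 0 < d.
  apply: mulr_gt0; first by rewrite invr_gt0.
  by apply: mulr_gt0 => //; apply: divr_gt0 => //; exact: hb u uV tm tin.
have main : forall t, 0 < t -> t <= 2^-1 -> d <= t.
  move=> t t0 th.
  have t1 : 0 <= t <= 1 by apply/andP; split; lra.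
  have hx := xin t t1; have cx : cube (xt t) := hx.1.
  have [Spos hc] := key hv hf hx.
  set S := \sum_(v in vertices n k) _ in Spos hc.
  have Sle : S <= t.
    have := hc j0; rewrite xj => e.
    suff : t * S <= t * t by rewrite ler_pM2l.
    rewrite -e.
    apply: (@le_trans _ _ (\sum_(v in vertices n k) (#|vertices n k|%:R)^-1 * (t * t))).
      apply: ler_sum => v vV; rewrite vvE; case: ifP => jv; last first.
        by rewrite mulr0 mulr_ge0 // ?invr_ge0 ?mulr_ge0 // ltW.
      rewrite mulr1; apply: s_le => //; first by rewrite mulr_ge0 // ltW.
      move=> tt ttin.
      have aj := facet_a hv hf k0 kn vV ttin jv.
      have fj : fac tt.2 (xt t) j0 <= t by rewrite -{2}(xj t); apply: fac_le_x.
      have f01 : forall m, 0 <= fac tt.2 (xt t) m <= 1 by move=> m; apply: fac01.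
      case iv: (i0 \in v).
        have : ~~ (u \subset v).
          apply/negP => uv; have : u == v.
            by rewrite eqEcard uv cu; move: vV; rewrite /vertices inE => /eqP ->; exact: leqnn.
          by move/eqP => e'; move: ju; rewrite e' jv.
        case/subsetPn => l lu lv.
        have li : l != i0 by apply/eqP => e'; move: lv; rewrite e' iv.
        have bl := facet_b hv hf hk1 kn vV ttin lv.
        have fl : fac tt.2 (xt t) l <= 0.
          by apply: le_trans (fac_le_1x (cx l) bl) _; rewrite xu // subrr.
        rewrite eval_fac; apply: le_trans (prod_le1 l f01) _.
        by apply: le_trans fl _; rewrite mulr_ge0 // ltW.
      have bi := facet_b hv hf hk1 kn vV ttin (negbT iv).
      have fi : fac tt.2 (xt t) i0 <= t.
        by apply: le_trans (fac_le_1x (cx i0) bi) _; rewrite xi; lra.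
      rewrite eval_fac; apply: le_trans (prod_le2 (l := j0) (l' := i0) _ f01) _.
        by rewrite eq_sym.
      apply: ler_pM => //; [by case/andP: (f01 j0) | by case/andP: (f01 i0)].
    rewrite sumr_const -(mulr_natr ((#|vertices n k|%:R)^-1 * (t * t))) mulrC mulrA mulfV ?mul1r //.
    exact: lt0r_neq0.
  have : d <= S.
    apply: (@le_trans _ _ (race_round_succ (vertices n k) P C (xt t) u)); last first.
      rewrite /S (bigD1 u) //= lerDl; apply: sumr_ge0 => v /andP[vV _]; exact: s_ge0.
    apply: le_trans (s_lb hv cx uV tin).
    apply: ler_wpM2l; first by rewrite invr_ge0 ltW.
    apply: ler_wpM2l; first by apply: divr_ge0; apply: ltW => //; exact: hb u uV tm tin.
    rewrite eval_fac; apply: ler_prod => m _; apply/andP; split.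
      apply: mulr_ge0; first by apply: exprn_ge0; exact: ltW.
      by case/andP: (fac01 tm.2 (cuc m)).
    apply: fac_lb; first exact: cx m.
      by rewrite vvE; case: (m \in u); [right|left].
    rewrite ler_distl /xt !vvE; case: (m \in u); case: (m \in w); apply/andP; split; lra.
  lra.
have dh := main _ h20 (lexx _).
have := main (d / 2) _ _; lra.
Qed.
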